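(* Let $\Delta\subset\mathbb{R}^2$ be a lattice polygon with $\operatorname{lw}(\Delta)=d$. If $\Delta$ has two linearly independent lattice width directions $v,w\in\mathbb{Z}^2$, then $\operatorname{ls}_\square(\Delta)=d$.
   Context: A lattice polygon is the convex hull of a finite non-empty set of points of $\mathbb{Z}^2$. A lattice direction is a non-zero primitive vector $v\in\mathbb{Z}^2$. For a lattice polygon $\Delta$ and a lattice direction $v$, $\operatorname{lw}_v(\Delta)=\max_{P\in\Delta}\langle P,v\rangle-\min_{P\in\Delta}\langle P,v\rangle$, and the lattice width is $\operatorname{lw}(\Delta)=\min_v\operatorname{lw}_v(\Delta)$ over all lattice directions $v$. A lattice width direction of $\Delta$ is a lattice direction $v$ with $\operatorname{lw}_v(\Delta)=\operatorname{lw}(\Delta)$. A unimodular transformation is a map $x\mapsto Ax+b$ with $A\in\mathrm{GL}_2(\mathbb{Z})$, $b\in\mathbb{Z}^2$; two lattice polygons are equivalent if one is mapped onto the other by a unimodular transformation. With $\square=\operatorname{conv}\{(0,0),(1,0),(1,1),(0,1)\}$, $\operatorname{ls}_\square(\Delta)$ is the smallest integer $d\ge 0$ for which there is a unimodular transformation $\varphi$ with $\varphi(\Delta)\subset d\square=[0,d]\times[0,d]$. *)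

(* Defs.v *)
From Stdlib Require Import Reals ZArith List.
Open Scope R_scope.

Definition pt := (R * R)%type.
Definition zpt := (Z * Z)%type.

Definition of_zpt (p : zpt) : pt := (IZR (fst p), IZR (snd p)).

(* Convex hull of a finite list of lattice points: all convex combinations
   sum_i w_i * s_i with w_i >= 0, sum_i w_i = 1. *)
Fixpoint wsum (ws : list R) (S : list zpt) : pt :=
  match ws, S with
  | w :: ws', s :: S' =>
      let r := wsum ws' S' in
      (w * IZR (fst s) + fst r, w * IZR (snd s) + snd r)
  | _, _ => (0, 0)
  end.

Definition conv (S : list zpt) (x : pt) : Prop :=
  exists ws : list R,
    length ws = length S /\ Forall (fun w => 0 <= w) ws /\
    fold_right Rplus 0 ws = 1 /\ x = wsum ws S.

Definition lattice_dir (v : zpt) : Prop :=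
  v <> (0%Z, 0%Z) /\ Z.gcd (fst v) (snd v) = 1%Z.

Definition dot (P : pt) (v : zpt) : R :=
  fst P * IZR (fst v) + snd P * IZR (snd v).

Definition lw_dir_is (D : pt -> Prop) (v : zpt) (l : R) : Prop :=
  exists M m : R,
    (exists P, D P /\ dot P v = M) /\ (forall P, D P -> dot P v <= M) /\
    (exists P, D P /\ dot P v = m) /\ (forall P, D P -> m <= dot P v) /\
    l = M - m.

Definition lw_is (D : pt -> Prop) (l : R) : Prop :=
  (exists v, lattice_dir v /\ lw_dir_is D v l) /\
  (forall v l', lattice_dir v -> lw_dir_is D v l' -> l <= l').

Definition width_dir (D : pt -> Prop) (v : zpt) : Prop :=
  lattice_dir v /\ exists l, lw_is D l /\ lw_dir_is D v l.

(* Unimodular transformation x |-> A x + b, A = [[a11 a12];[a21 a22]] in GL_2(Z),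
   b in Z^2. *)
Record unimod := Unimod { a11 : Z; a12 : Z; a21 : Z; a22 : Z; b1 : Z; b2 : Z }.

Definition unimod_ok (f : unimod) : Prop :=
  (a11 f * a22 f - a12 f * a21 f = 1 \/ a11 f * a22 f - a12 f * a21 f = -1)%Z.

Definition apply_unimod (f : unimod) (x : pt) : pt :=
  (IZR (a11 f) * fst x + IZR (a12 f) * snd x + IZR (b1 f),
   IZR (a21 f) * fst x + IZR (a22 f) * snd x + IZR (b2 f)).

Definition fits_in_square (D : pt -> Prop) (d : Z) : Prop :=
  exists f, unimod_ok f /\
    forall x, D x ->
      0 <= fst (apply_unimod f x) <= IZR d /\ 0 <= snd (apply_unimod f x) <= IZR d.

Definition ls_square_is (D : pt -> Prop) (d : Z) : Prop :=
  (0 <= d)%Z /\ fits_in_square D d /\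
  (forall d', (0 <= d')%Z -> fits_in_square D d' -> (d <= d')%Z).

Definition lin_indep (v w : zpt) : Prop :=
  (fst v * snd w - snd v * fst w <> 0)%Z.

(* Main.v *)
Require Import Defs.
From Stdlib Require Import Reals ZArith List.
From Stdlib Require Import Lra Lia Psatz Znumtheory Classical.

Definition zdot (s u : zpt) : Z := (fst s * fst u + snd s * snd u)%Z.
Definition det (p q : zpt) : Z := (fst p * snd q - snd p * fst q)%Z.

Lemma dot_of_zpt s u : dot (of_zpt s) u = IZR (zdot s u).
Proof. unfold dot, of_zpt, zdot; simpl. rewrite plus_IZR, !mult_IZR. ring. Qed.

Lemma wsum_zeros S : wsum (repeat 0%R (length S)) S = (0%R, 0%R).
Proof.
  induction S as [|a S IH]; simpl; auto. rewrite IH; simpl. f_equal; ring.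
Qed.

Lemma sum_zeros n : fold_right Rplus 0%R (repeat 0%R n) = 0%R.
Proof. induction n; simpl; auto. rewrite IHn; ring. Qed.

Lemma in_conv S s : In s S -> conv S (of_zpt s).
Proof.
  induction S as [|a S IH]; simpl; [tauto|]. intros [H|H].
  - subst. exists (1%R :: repeat 0%R (length S)). split; [simpl; rewrite repeat_length; auto|].
    split; [constructor; [lra| apply Forall_forall; intros x Hx; apply repeat_spec in Hx; lra]|].
    split; [simpl; rewrite sum_zeros; ring|].
    simpl. rewrite wsum_zeros. unfold of_zpt; simpl. f_equal; ring.
  - destruct (IH H) as [ws [H1 [H2 [H3 H4]]]].
    exists (0%R :: ws). split; [simpl; auto|]. split; [constructor; auto; lra|].
    split; [simpl; rewrite H3; ring|]. simpl. rewrite <- H4. destruct (of_zpt s); simpl; f_equal; ring.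
Qed.

Lemma conv_bound_aux S u lo hi :
  (forall s, In s S -> lo <= dot (of_zpt s) u <= hi)%R ->
  forall ws, length ws = length S -> Forall (fun w => 0 <= w)%R ws ->
  (lo * fold_right Rplus 0 ws <= dot (wsum ws S) u <= hi * fold_right Rplus 0 ws)%R.
Proof.
  intro Hb. induction S as [|a S IH]; intros ws Hl Hf.
  - destruct ws; simpl in *; [|discriminate]. unfold dot; simpl. lra.
  - destruct ws as [|w ws]; simpl in Hl; [discriminate|]. inversion Hf; subst.
    assert (Hw : (dot (wsum (w :: ws) (a :: S)) u = w * dot (of_zpt a) u + dot (wsum ws S) u)%R).
    { unfold dot, of_zpt; simpl. ring. }
    rewrite Hw. simpl.
    destruct (Hb a (or_introl eq_refl)) as [Ha1 Ha2].
    assert (IH' := IH (fun s Hs => Hb s (or_intror Hs)) ws (eq_add_S _ _ Hl) H2).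
    assert (w * lo <= w * dot (of_zpt a) u)%R by (apply Rmult_le_compat_l; lra).
    assert (w * dot (of_zpt a) u <= w * hi)%R by (apply Rmult_le_compat_l; lra).
    lra.
Qed.

Lemma conv_bound S u lo hi x :
  (forall s, In s S -> lo <= dot (of_zpt s) u <= hi)%R -> conv S x -> (lo <= dot x u <= hi)%R.
Proof.
  intros Hb [ws [H1 [H2 [H3 H4]]]]. subst x.
  pose proof (conv_bound_aux S u lo hi Hb ws H1 H2). rewrite H3 in H. lra.
Qed.

Lemma ex_min (g : zpt -> Z) S : S <> nil -> exists s0, In s0 S /\ forall s, In s S -> (g s0 <= g s)%Z.
Proof.
  induction S as [|a S IH]; intro Hne; [congruence|].
  destruct S as [|b S'].
  - exists a; simpl; split; auto. intros s [H|H]; [subst; lia|tauto].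
  - destruct IH as [s1 [Hs1 Hm]]; [discriminate|].
    destruct (Z.le_gt_cases (g a) (g s1)).
    + exists a. split; [left; auto|]. intros s [H'|H']; [subst; lia|]. specialize (Hm s H'). lia.
    + exists s1. split; [right; auto|]. intros s [H'|H']; [subst; lia|]. auto.
Qed.

Lemma ex_max (g : zpt -> Z) S : S <> nil -> exists s0, In s0 S /\ forall s, In s S -> (g s <= g s0)%Z.
Proof.
  intro H. destruct (ex_min (fun s => - g s)%Z S H) as [s0 [H1 H2]].
  exists s0; split; auto. intros s Hs; specialize (H2 s Hs); lia.
Qed.

Section Desc.
Variable S : list zpt.
Variable d : Z.
Definition Pz (u : zpt) := forall s t, In s S -> In t S -> (zdot s u - zdot t u <= d)%Z.

Lemma red (D a : Z) : D <> 0%Z -> exists a' k, (a = a' + k * D /\ 2 * Z.abs a' <= Z.abs D)%Z.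
Proof.
  intro HD. pose proof (Z.div_mod a D HD).
  destruct (Z.le_gt_cases 0 D).
  - pose proof (Z.mod_pos_bound a D ltac:(lia)).
    destruct (Z.le_gt_cases (2 * (a mod D)) D).
    + exists (a mod D), (a / D). lia.
    + exists (a mod D - D)%Z, (a / D + 1)%Z. lia.
  - pose proof (Z.mod_neg_bound a D ltac:(lia)).
    destruct (Z.le_gt_cases (-D) (- 2 * (a mod D))).
    + exists (a mod D - D)%Z, (a / D + 1)%Z. lia.
    + exists (a mod D), (a / D). lia.
Qed.

Lemma find_x (p q : zpt) : (Z.abs (det p q) >= 2)%Z ->
  exists x a b, (det p q * fst x = a * fst p + b * fst q /\ det p q * snd x = a * snd p + b * snd q)%Z
    /\ ~ ((det p q | a) /\ (det p q | b))%Z.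
Proof.
  intro H. destruct p as [p1 p2], q as [q1 q2]. unfold det in *; simpl in *.
  set (D := (p1 * q2 - p2 * q1)%Z) in *.
  destruct (classic (Z.divide D q2 /\ Z.divide D (-p2))) as [[H1 H2]|Hn].
  - destruct (classic (Z.divide D (-q1) /\ Z.divide D p1)) as [[H3 H4]|Hn'].
    + exfalso. destruct H1 as [k1 E1], H2 as [k2 E2], H3 as [k3 E3], H4 as [k4 E4].
      assert (E : (D = D * (D * (k4 * k1 - k2 * k3)))%Z).
      { unfold D at 1. rewrite E1. replace p2 with (- (-p2))%Z by ring. rewrite E2.
        replace q1 with (- (-q1))%Z by ring. rewrite E3, E4. ring. }
      assert (D <> 0%Z) by lia.
      assert (HH : (D * (k4 * k1 - k2 * k3) = 1)%Z).
      { apply (Z.mul_reg_l _ _ D); auto. rewrite <- E. ring. }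
      assert (Z.abs D = 1%Z).
      { destruct (Z.eq_mul_1 _ _ HH); lia. }
      lia.
    + exists (0%Z, 1%Z), (-q1)%Z, p1. simpl. unfold D. split; [split; ring|]. tauto.
  - exists (1%Z, 0%Z), q2, (-p2)%Z. simpl. unfold D. split; [split; ring|]. tauto.
Qed.

Lemma Pz_comb (D a' b' : Z) (p q x : zpt) :
  D <> 0%Z -> (2 * Z.abs a' <= Z.abs D)%Z -> (2 * Z.abs b' <= Z.abs D)%Z ->
  (D * fst x = a' * fst p + b' * fst q)%Z -> (D * snd x = a' * snd p + b' * snd q)%Z ->
  Pz p -> Pz q -> Pz x.
Proof.
  intros HD Ha Hb E1 E2 Hp Hq s t Hs Ht.
  assert (E : (D * (zdot s x - zdot t x) = a' * (zdot s p - zdot t p) + b' * (zdot s q - zdot t q))%Z).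
  { replace (D * (zdot s x - zdot t x))%Z with
      (fst s * (D * fst x) + snd s * (D * snd x) - fst t * (D * fst x) - snd t * (D * snd x))%Z
      by (unfold zdot; ring).
    rewrite E1, E2. unfold zdot; ring. }
  pose proof (Hp s t Hs Ht). pose proof (Hp t s Ht Hs).
  pose proof (Hq s t Hs Ht). pose proof (Hq t s Ht Hs).
  set (dp := (zdot s p - zdot t p)%Z) in *. set (dq := (zdot s q - zdot t q)%Z) in *.
  set (dx := (zdot s x - zdot t x)%Z) in *.
  assert (Hdp : (Z.abs dp <= d)%Z) by lia. assert (Hdq : (Z.abs dq <= d)%Z) by lia.
  assert (A : (Z.abs D * Z.abs dx <= Z.abs a' * d + Z.abs b' * d)%Z).
  { rewrite <- Z.abs_mul, E. eapply Z.le_trans; [apply Z.abs_triangle|].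
    rewrite !Z.abs_mul. apply Z.add_le_mono; apply Z.mul_le_mono_nonneg_l; lia. }
  assert (B : (Z.abs a' * d + Z.abs b' * d <= Z.abs D * d)%Z).
  { rewrite <- Z.mul_add_distr_r. apply Z.mul_le_mono_nonneg_r; lia. }
  assert ((Z.abs dx <= d)%Z).
  { apply (Z.mul_le_mono_pos_l _ _ (Z.abs D)); lia. }
  lia.
Qed.

Lemma descent (n : nat) : forall p q, det p q <> 0%Z -> (Z.abs (det p q) <= Z.of_nat n)%Z ->
  Pz p -> Pz q -> exists p' q', (det p' q' = 1 \/ det p' q' = -1)%Z /\ Pz p' /\ Pz q'.
Proof.
  induction n as [|n IH]; intros p q H0 Hn Hp Hq; [lia|].
  destruct (Z.eq_dec (Z.abs (det p q)) 1) as [E|E].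
  { exists p, q. split; auto. lia. }
  set (D := det p q) in *.
  destruct (find_x p q ltac:(lia)) as [x [a [b [[E1 E2] Hnd]]]]. fold D in E1, E2, Hnd.
  destruct (red D a H0) as [a' [k [Ea Ha]]].
  destruct (red D b H0) as [b' [k' [Eb Hb]]].
  set (x' := (fst x - k * fst p - k' * fst q, snd x - k * snd p - k' * snd q)%Z).
  assert (F1 : (D * fst x' = a' * fst p + b' * fst q)%Z).
  { unfold x'; simpl. replace (D * (fst x - k * fst p - k' * fst q))%Z with
     (D * fst x - k * D * fst p - k' * D * fst q)%Z by ring. rewrite E1, Ea, Eb. ring. }
  assert (F2 : (D * snd x' = a' * snd p + b' * snd q)%Z).
  { unfold x'; simpl. replace (D * (snd x - k * snd p - k' * snd q))%Z with
     (D * snd x - k * D * snd p - k' * D * snd q)%Z by ring. rewrite E2, Ea, Eb. ring. }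
  assert (Px : Pz x') by (apply (Pz_comb D a' b' p q x'); auto).
  destruct (Z.eq_dec a' 0) as [Za|Za].
  - destruct (Z.eq_dec b' 0) as [Zb|Zb].
    { exfalso. apply Hnd. subst a' b'. split; [exists k|exists k']; lia. }
    assert (Dt : det x' p = (- b')%Z).
    { apply (Z.mul_reg_l _ _ D); auto.
      replace (D * det x' p)%Z with ((D * fst x') * snd p - (D * snd x') * fst p)%Z
        by (unfold det; ring).
      rewrite F1, F2. unfold D, det. ring. }
    apply (IH x' p); auto; rewrite Dt; lia.
  - assert (Dt : det x' q = a').
    { apply (Z.mul_reg_l _ _ D); auto.
      replace (D * det x' q)%Z with ((D * fst x') * snd q - (D * snd x') * fst q)%Z
        by (unfold det; ring).
      rewrite F1, F2. unfold D, det. ring. }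
    apply (IH x' q); auto; rewrite Dt; lia.
Qed.
End Desc.

Lemma width_Pz S d v : lw_is (conv S) (IZR d) -> width_dir (conv S) v -> Pz S d v.
Proof.
  intros [[v0 [Hv0 Hl0]] Hmin] [_ [l [[_ Hmin'] Hl]]].
  pose proof (Hmin' v0 (IZR d) Hv0 Hl0) as Hle.
  destruct Hl as [M [m [_ [HM [_ [Hm El]]]]]].
  intros s t Hs Ht. apply le_IZR. rewrite minus_IZR, <- !dot_of_zpt.
  pose proof (HM _ (in_conv S s Hs)). pose proof (Hm _ (in_conv S t Ht)). lra.
Qed.

Theorem lemma2p1 (S : list zpt) (d : Z) (v w : zpt) :
  S <> nil ->
  lw_is (conv S) (IZR d) ->
  width_dir (conv S) v ->
  width_dir (conv S) w ->
  lin_indep v w ->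
  ls_square_is (conv S) d.
Proof.
  intros Hne Hlw Hv Hw Hind.
  pose proof (width_Pz S d v Hlw Hv) as Pv.
  pose proof (width_Pz S d w Hlw Hw) as Pw.
  destruct S as [|s0 S0]; [congruence|].
  assert (Hd : (0 <= d)%Z).
  { specialize (Pv s0 s0 (or_introl eq_refl) (or_introl eq_refl)). lia. }
  split; [exact Hd|]. split.
  - destruct (descent (s0 :: S0) d (Z.abs_nat (det v w)) v w ltac:(unfold det, lin_indep in *; lia)
      ltac:(lia) Pv Pw) as [p [q [Hdet [Pp Pq]]]].
    destruct (ex_min (fun s => zdot s p) _ Hne) as [sp [Hsp Hmp]].
    destruct (ex_min (fun s => zdot s q) _ Hne) as [sq [Hsq Hmq]].
    exists (Unimod (fst p) (snd p) (fst q) (snd q) (- zdot sp p) (- zdot sq q)).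
    split; [unfold unimod_ok; simpl; unfold det in Hdet; lia|].
    intros x Hx. unfold apply_unimod; simpl.
    assert (Bp : (IZR (zdot sp p) <= dot x p <= IZR (zdot sp p) + IZR d)%R).
    { apply (conv_bound (s0 :: S0)); auto. intros s Hs. rewrite dot_of_zpt.
      pose proof (Hmp s Hs). pose proof (Pp s sp Hs Hsp). split; [apply IZR_le; lia|].
      rewrite <- plus_IZR. apply IZR_le. lia. }
    assert (Bq : (IZR (zdot sq q) <= dot x q <= IZR (zdot sq q) + IZR d)%R).
    { apply (conv_bound (s0 :: S0)); auto. intros s Hs. rewrite dot_of_zpt.
      pose proof (Hmq s Hs). pose proof (Pq s sq Hs Hsq). split; [apply IZR_le; lia|].
      rewrite <- plus_IZR. apply IZR_le. lia. }
    unfold dot in Bp, Bq. rewrite !opp_IZR. split; lra.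
  - intros d' Hd' [f [Hf Hfit]].
    set (r := (a11 f, a12 f)).
    destruct (ex_min (fun s => zdot s r) _ Hne) as [smin [Hsmin Hmin]].
    destruct (ex_max (fun s => zdot s r) _ Hne) as [smax [Hsmax Hmax]].
    assert (Hr : lattice_dir r).
    { unfold unimod_ok in Hf. split.
      - unfold r; intro E; injection E; intros E1 E2. rewrite E1, E2 in Hf. lia.
      - unfold r; simpl. apply Zis_gcd_gcd; [lia|]. apply bezout_rel_prime.
        destruct Hf as [Hf|Hf].
        + apply (Bezout_intro _ _ _ (a22 f) (- a21 f)). lia.
        + apply (Bezout_intro _ _ _ (- a22 f) (a21 f)). lia. }
    assert (Hl : lw_dir_is (conv (s0 :: S0)) r (IZR (zdot smax r) - IZR (zdot smin r))).
    { exists (IZR (zdot smax r)), (IZR (zdot smin r)). split.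
      { exists (of_zpt smax). split; [apply in_conv; auto|apply dot_of_zpt]. }
      split.
      { intros P HP. refine (proj2 (conv_bound _ r (IZR (zdot smin r)) (IZR (zdot smax r)) P _ HP)).
        intros s Hs. rewrite dot_of_zpt. split; apply IZR_le; auto. }
      split.
      { exists (of_zpt smin). split; [apply in_conv; auto|apply dot_of_zpt]. }
      split; [|reflexivity].
      intros P HP. refine (proj1 (conv_bound _ r (IZR (zdot smin r)) (IZR (zdot smax r)) P _ HP)).
      intros s Hs. rewrite dot_of_zpt. split; apply IZR_le; auto. }
    destruct Hlw as [_ Hlwm]. pose proof (Hlwm r _ Hr Hl) as H1.
    pose proof (Hfit _ (in_conv _ _ Hsmax)) as [[_ A] _].
    pose proof (Hfit _ (in_conv _ _ Hsmin)) as [[B _] _].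
    unfold apply_unimod in A, B; simpl in A, B.
    pose proof (dot_of_zpt smax r) as Dm. pose proof (dot_of_zpt smin r) as Dn.
    unfold dot, r, of_zpt in *; simpl in *.
    apply le_IZR. lra.
Qed.
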